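(* Let $A$ be an abelian group such that every uniformly fully inert subgroup of $A\oplus A$ is commensurable with some fully invariant subgroup of $A\oplus A$. Then every uniformly fully inert subgroup of $A$ is commensurable with some fully invariant subgroup of $A$.
   Context: All groups are additively written abelian groups. A subgroup $F$ of a group $G$ is fully invariant if $\phi(F)\subseteq F$ for every endomorphism $\phi$ of $G$. A subgroup $S$ of $G$ is uniformly fully inert if there is a fixed positive integer $m$ such that $(\phi(S)+S)/S$ has at most $m$ elements for every endomorphism $\phi$ of $G$. Subgroups $B,C$ of $G$ are commensurable if both $(B+C)/B$ and $(B+C)/C$ are finite. *)

(* Defs.v *)
From mathcomp Require Import all_boot all_algebra.
Set Implicit Arguments. Unset Strict Implicit. Unset Printing Implicit Defensive.
Import GRing.Theory.
Local Open Scope ring_scope.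

Section Defs.
Variable A : zmodType.

Definition is_subgroup (S : A -> Prop) : Prop :=
  S 0 /\ (forall x y, S x -> S y -> S (x - y)).

Definition is_endo (phi : A -> A) : Prop :=
  forall x y, phi (x + y) = phi x + phi y.

Definition img (phi : A -> A) (S : A -> Prop) : A -> Prop :=
  fun y => exists2 x, S x & y = phi x.

Definition sumg (B C : A -> Prop) : A -> Prop :=
  fun z => exists b c, [/\ B b, C c & z = b + c].

(* H is covered by at most m cosets of K; when K is a subgroup contained in
   the subgroup H, this says exactly that H/K has at most m elements. *)
Definition index_le (H K : A -> Prop) (m : nat) : Prop :=
  exists s : seq A, (size s <= m)%N /\
    forall x, H x -> exists2 y, y \in s & K (x - y).

Definition finite_index (H K : A -> Prop) : Prop := exists m, index_le H K m.

Definition commensurable (B C : A -> Prop) : Prop :=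
  finite_index (sumg B C) B /\ finite_index (sumg B C) C.

Definition fully_invariant (F : A -> Prop) : Prop :=
  is_subgroup F /\ forall phi, is_endo phi -> forall x, F x -> F (phi x).

Definition uniformly_fully_inert (S : A -> Prop) : Prop :=
  is_subgroup S /\ exists m : nat, (0 < m)%N /\
    forall phi, is_endo phi -> index_le (sumg (img phi S) S) S m.

End Defs.

(* Main.v *)
Require Import Defs.
From mathcomp Require Import all_boot all_algebra.
Import GRing.Theory.
Local Open Scope ring_scope.

Lemma pairD (A : zmodType) (a b c d : A) : (a,b)+(c,d) = (a+c,b+d) :> A*A.
Proof. by []. Qed.
Lemma pairB (A : zmodType) (a b c d : A) : (a,b)-(c,d) = (a-c,b-d) :> A*A.
Proof. by []. Qed.
Lemma rearr (A : zmodType) (a b c y1 y2 : A) :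
  a + b + c - (y1 + y2) = (a - y1) + (b - y2) + c.
Proof. by rewrite opprD addrAC addrACA addrAC. Qed.

Lemma sg_add (A : zmodType) (S : A -> Prop) x y :
  is_subgroup S -> S x -> S y -> S (x + y).
Proof.
move=> [S0 SB] Sx Sy; have := SB x (0 - y) Sx (SB _ _ S0 Sy).
by rewrite sub0r opprK.
Qed.

Lemma endo_comp (A : zmodType) (phi : (A*A)%type -> (A*A)%type) (i j : bool) :
  is_endo phi ->
  is_endo (fun a : A => let v := phi (if i then (a, 0) else (0, a)) in
                        if j then v.1 else v.2).
Proof.
move=> hphi x y.
have -> : (if i then (x + y, 0) else (0, x + y)) =
          (if i then (x, 0) else (0, x)) + (if i then (y, 0) else (0, y)) :> A*A.
  by case: i; rewrite pairD ?addr0 ?add0r.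
by rewrite hphi; case: j.
Qed.

Lemma ufi_sq (A : zmodType) (S : A -> Prop) :
  uniformly_fully_inert S ->
  uniformly_fully_inert (fun p : (A * A)%type => S p.1 /\ S p.2).
Proof.
move=> [HSg [m [m0 Hm]]]; have [S0 SB] := HSg.
split.
  split; first by split.
  by move=> [a b] [c d] [Sa Sb] [Sc Sd]; split; apply: SB.
exists (m * m * (m * m))%N; split; first by rewrite !muln_gt0 m0.
move=> phi hphi.
pose p i j := (fun a : A => let v := phi (if i then (a, 0) else (0, a)) in
                        if j then v.1 else v.2).
have cov : forall i j, exists s : seq A, (size s <= m)%N /\
    forall a, S a -> exists2 y, y \in s & S (p i j a - y).
  move=> i j; have [s [hs Hs]] := Hm _ (@endo_comp _ phi i j hphi).
  exists s; split => // a Sa; apply: Hs.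
  exists (p i j a), 0; split => //; last by rewrite addr0.
  by exists a.
have [s11 [h11 H11]] := cov true true.
have [s12 [h12 H12]] := cov false true.
have [s21 [h21 H21]] := cov true false.
have [s22 [h22 H22]] := cov false false.
pose L1 := [seq u + v | u <- s11, v <- s12].
pose L2 := [seq u + v | u <- s21, v <- s22].
exists [seq (u, v) | u <- L1, v <- L2]; split.
  by rewrite !size_allpairs; apply: leq_mul; apply: leq_mul.
move=> z [b [c [[q [Sq1 Sq2] ->] [Sc1 Sc2] ->]]].
have eq : phi q = phi (q.1, 0) + phi (0, q.2).
  by rewrite -hphi pairD addr0 add0r; case: q {Sq1 Sq2}.
have [y1 in1 S1] := H11 _ Sq1.
have [y2 in2 S2] := H12 _ Sq2.
have [y3 in3 S3] := H21 _ Sq1.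
have [y4 in4 S4] := H22 _ Sq2.
exists (y1 + y2, y3 + y4).
  by apply: allpairs_f; apply: allpairs_f.
rewrite eq /=; split.
  rewrite rearr; apply: sg_add => //; apply: sg_add => //.
rewrite rearr; apply: sg_add => //; apply: sg_add => //.
Qed.

Theorem proposition2p3 (A : zmodType) :
  (forall S : (A * A)%type -> Prop, uniformly_fully_inert S ->
     exists F, fully_invariant F /\ commensurable S F) ->
  forall S : A -> Prop, uniformly_fully_inert S ->
     exists F, fully_invariant F /\ commensurable S F.
Proof.
move=> H S HS.
have [[S0 SB] _] := HS.
have [F [[[F0 FB] FI] [[mT [sT [_ HT]]] [mF [sF [_ HF]]]]]] := H _ (@ufi_sq _ S HS).
have proj : forall u v : A, F (u, v) -> F (u, 0).
  move=> u v Fuv.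
  have e : is_endo (fun q : (A * A)%type => (q.1, 0 : A)).
    by move=> x y; rewrite pairD addr0.
  exact: (FI _ e _ Fuv).
exists (fun a => F (a, 0)); split.
  split.
    split => // x y Fx Fy; have := FB _ _ Fx Fy; by rewrite pairB subr0.
  move=> psi hpsi x Fx.
  have e : is_endo (fun q : (A * A)%type => (psi q.1, 0 : A)).
    by move=> a b; rewrite pairD addr0 hpsi.
  exact: (FI _ e _ Fx).
have inT : forall x, sumg S (fun a => F (a, 0)) x ->
    sumg (fun p : (A * A)%type => S p.1 /\ S p.2) F (x, 0).
  move=> x [b [c [Sb Fc ->]]]; exists (b, 0), (c, 0); split => //.
  by rewrite pairD addr0.
split.
  exists (size sT), (map fst sT); split; first by rewrite size_map.
  move=> x /inT /HT [y ys [Sy _]]; exists y.1; first by apply: map_f.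
  by [].
exists (size sF), (map fst sF); split; first by rewrite size_map.
move=> x /inT /HF [y ys Fy]; exists y.1; first by apply: map_f.
by apply: (proj _ (0 - y.2)); case: y ys Fy.
Qed.
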